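(* For any positive integer $m$ and any integer $\Delta$ with $1\leq \Delta \leq m$ such that $(\Delta-1)m$ is even, there exists a finite simple undirected graph $G$ with $\operatorname{adim}(G)=m$ and maximum degree $\Delta$ such that $$\operatorname{adim}(G) = \frac{2(|V(G)|-1)}{\Delta+3}.$$
   Context: For a graph $G$, $d(u,v)$ is the shortest-path distance ($\infty$ if $u,v$ lie in different components), and $d_1(u,v)=\min(d(u,v),2)$. A set $A\subseteq V(G)$ is an adjacency resolving set if for all distinct $x,y\in V(G)$ there is $z\in A$ with $d_1(z,x)\neq d_1(z,y)$. The adjacency dimension $\operatorname{adim}(G)$ is the minimum cardinality of an adjacency resolving set. *)

(* Defs.v *)
From mathcomp Require Import all_boot all_order.
Set Implicit Arguments. Unset Strict Implicit. Unset Printing Implicit Defensive.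

Definition simple_graph (T : finType) (e : rel T) : Prop :=
  symmetric e /\ irreflexive e.

(* d_1(u,v) = min(d(u,v), 2): 0 if u = v, 1 if adjacent, 2 otherwise. *)
Definition d1 (T : finType) (e : rel T) (u v : T) : nat :=
  if u == v then 0 else if e u v then 1 else 2.

Definition adj_resolving (T : finType) (e : rel T) (A : {set T}) : bool :=
  [forall x : T, forall y : T,
     (x != y) ==> [exists z in A, d1 e z x != d1 e z y]].

(* Adjacency dimension: minimum cardinality of an adjacency resolving set
   (setT is always resolving, so the default #|T| is never below the min). *)
Definition adim (T : finType) (e : rel T) : nat :=
  \big[minn/#|T|]_(A : {set T} | adj_resolving e A) #|A|.

Definition maxdeg (T : finType) (e : rel T) : nat :=
  \max_(v : T) #|[set u | e v u]|.

(* Main.v *)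
Require Import Defs.
From mathcomp Require Import all_boot all_order.
From mathcomp Require Import zify.

Lemma sum_card (T : finType) (A : {pred T}) (P : pred T) :
  \sum_(v in A) (P v : nat) = #|[set v in A | P v]|.
Proof.
rewrite -sum1_card big_mkcond [RHS]big_mkcond /=.
by apply: eq_bigr => v _; rewrite inE; case: (v \in A); case: (P v).
Qed.

Lemma lower_bound (T : finType) (e : rel T) D (A : {set T}) :
  symmetric e -> irreflexive e -> (forall v, #|[set u | e v u]| <= D) ->
  adj_resolving e A -> 2 * (#|T| - 1) <= #|A| * (D + 3).
Proof.
move=> esym eirr hdeg /forallP res.
set B := ~: A.
pose tr v := [set u in A | e v u].
have inj : {in B &, injective tr}.
  move=> x y; rewrite !inE => xA yA trxy; apply/eqP; apply/negPn/negP => nxy.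
  move: (res x) => /forallP /(_ y) /implyP /(_ nxy) /existsP [z /andP [zA]].
  have zx : z != x by apply: contraNneq xA => <-.
  have zy : z != y by apply: contraNneq yA => <-.
  rewrite /d1 (negPf zx) (negPf zy).
  have : (z \in tr x) = (z \in tr y) by rewrite trxy.
  rewrite !inE zA /= esym [e y z]esym => ->.
  by case: (e z y).
pose S := \sum_(v in B) #|tr v|.
have S1 : S <= #|A| * D.
  rewrite /S.
  have -> : \sum_(v in B) #|tr v| = \sum_(v in B) \sum_(a in A) (e v a : nat).
    by apply: eq_bigr => v _; rewrite sum_card.
  rewrite exchange_big /= -sum_nat_const; apply: leq_sum => a _.
  apply: leq_trans (hdeg a).
  apply: (@leq_trans #|[set v in [set: T] | e a v]|).
    rewrite -sum_card [X in _ <= X]big_mkcond [X in X <= _]big_mkcond /=.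
    apply: leq_sum => v _; rewrite in_setT esym; case: ifP => _ //=.
  by apply: eq_leq; apply: eq_card => v; rewrite !inE.
pose c0 := \sum_(v in B) (#|tr v| == 0 : nat).
pose c1 := \sum_(v in B) (#|tr v| == 1 : nat).
pose c2 := \sum_(v in B) (1 < #|tr v| : nat).
have cB : #|B| = c0 + c1 + c2.
  rewrite -sum1_card /c0 /c1 /c2 -!big_split /=; apply: eq_bigr => v _.
  by case: #|tr v| => [|[|n]].
have cS : c1 + 2 * c2 <= S.
  rewrite /c1 /c2 /S big_distrr -big_split /=; apply: leq_sum => v _.
  by case: #|tr v| => [|[|n]].
have c0le : c0 <= 1.
  rewrite /c0 sum_card -(card_in_imset (f := tr)); last first.
    by move=> x y /setIdP[xB _] /setIdP[yB _]; apply: inj.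
  rewrite -(cards1 (@set0 T)); apply: subset_leq_card; apply/subsetP => s.
  move=> /imsetP [v]; rewrite inE => /andP[_ /eqP /cards0_eq] -> ->.
  by rewrite inE.
have c1le : c1 <= #|A|.
  rewrite /c1 sum_card -(card_in_imset (f := tr)); last first.
    by move=> x y /setIdP[xB _] /setIdP[yB _]; apply: inj.
  apply: leq_trans (leq_imset_card (fun a => [set a]) A).
  apply: subset_leq_card; apply/subsetP => s.
  move=> /imsetP [v]; rewrite inE => /andP[_ /cards1P [a ha]] ->.
  apply/imsetP; exists a => //.
  have : a \in tr v by rewrite ha set11.
  by rewrite inE => /andP[].
have cT := cardsC A.
rewrite -/B in cT.
nia.
Qed.

Lemma sum_eqn (n a : nat) : \sum_(j < n) (a == (j : nat) : nat) = (a < n).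
Proof.
elim: n => [|n IH]; first by rewrite big_ord0.
rewrite big_ord_recr /= IH; lia.
Qed.

Lemma sum_eqn' (n a : nat) : \sum_(j < n) ((j : nat) == a : nat) = (a < n).
Proof. by rewrite -(sum_eqn n a); apply: eq_bigr => j _; rewrite eq_sym. Qed.

Lemma sum_eqnD (n a c : nat) : \sum_(k < n) (a == (k : nat) + c : nat) = (c <= a) && (a < c + n).
Proof.
elim: n => [|n IH]; first by rewrite big_ord0; lia.
rewrite big_ord_recr /= IH; lia.
Qed.

Lemma sum_mod (m a c : nat) : 0 < m -> a < m -> \sum_(i < m) (a == ((i : nat) + c) %% m : nat) = 1.
Proof.
move=> m0 am.
pose f (i : 'I_m) : 'I_m := Ordinal (ltn_pmod (i + c) m0).
have finj : injective f.
  move=> i j /(congr1 val) /= /eqP; rewrite eqn_modDr !modn_small // => /eqP.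
  exact: val_inj.
have H := @reindex_inj _ _ 0 _ f xpredT (fun j : 'I_m => (a == (j : nat) : nat)) finj.
transitivity (\sum_(i < m) (a == (i : nat) : nat)); last by rewrite sum_eqn am.
by rewrite H; apply: eq_bigr.
Qed.

Lemma modc (m x c : nat) : x < m -> c < m ->
  ((x + c < m) && ((x + c) %% m == x + c)) || ((m <= x + c) && ((x + c) %% m == x + c - m)).
Proof.
move=> hx hc; case: (ltnP (x + c) m) => h /=.
  by rewrite modn_small // eqxx.
rewrite -{1}(subnK h) modnDr modn_small ?eqxx //; lia.
Qed.

Lemma deg_sum (T : finType) (e : rel T) v : #|[set u | e v u]| = \sum_u (e v u : nat).
Proof.
rewrite -sum1_card big_mkcond /=; apply: eq_bigr => u _; rewrite inE.
by case: (e v u).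
Qed.

Definition W (m r o : nat) : finType := ('I_m.+1 + ('I_m * 'I_r + 'I_(m./2) * 'I_o))%type.
Definition V (m r o : nat) : finType := ('I_m + W m r o)%type.

Definition trw {m r o : nat} (w : W m r o) (a : nat) : bool :=
  match w with
  | inl j => a == j
  | inr (inl p) => (a == p.1) || (a == (p.1 + p.2.+1) %% m)
  | inr (inr q) => (a == q.1) || (a == q.1 + m./2)
  end.

Definition ge {m r o : nat} : rel (V m r o) := fun u v =>
  match u, v with
  | inl a, inr w => trw w a
  | inr w, inl a => trw w a
  | _, _ => false
  end.

Lemma ge_simple m r o : simple_graph (@ge m r o).
Proof. by split; [case=> [a|w] [b|w'] | case=> [a|w]]. Qed.

Lemma card_V m r o : #|V m r o| = m + (m.+1 + (m * r + m./2 * o)).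
Proof. by rewrite /V /W !card_sum !card_prod !card_ord. Qed.

Lemma deg_A (m r o : nat) (a : 'I_m) : 0 < m -> 2 * r + 1 + o <= m -> o <= 1 ->
  (0 < o -> m = m./2 + m./2) ->
  #|[set u | @ge m r o (inl a) u]| = 2 * r + 1 + o.
Proof.
move=> hm hr ho he.
have ha := ltn_ord a.
rewrite deg_sum big_sumType /= big1 // add0n big_sumType big_sumType /= sum_eqn.
have P1 : \sum_(p : 'I_m * 'I_r) ((a:nat) == (p.1 : nat) : nat) = r.
  rewrite -(pair_bigA _ (fun (i : 'I_m) (d : 'I_r) => ((a:nat) == (i : nat) : nat))) /=.
  rewrite exchange_big /= (eq_bigr (fun _ => 1)); last by move=> d _; rewrite sum_eqn ha.
  by rewrite sum_nat_const card_ord muln1.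
have P2 : \sum_(p : 'I_m * 'I_r) ((a:nat) == ((p.1 : nat) + p.2.+1) %% m : nat) = r.
  rewrite -(pair_bigA _ (fun (i : 'I_m) (d : 'I_r) => ((a:nat) == ((i : nat) + d.+1) %% m : nat))) /=.
  rewrite exchange_big /= (eq_bigr (fun _ => 1)); last by move=> d _; rewrite sum_mod.
  by rewrite sum_nat_const card_ord muln1.
have Q1 : \sum_(q : 'I_(m./2) * 'I_o) ((a:nat) == (q.1 : nat) : nat) = o * (a < m./2).
  rewrite -(pair_bigA _ (fun (i : 'I_(m./2)) (d : 'I_o) => ((a:nat) == (i : nat) : nat))) /=.
  rewrite exchange_big /= (eq_bigr (fun _ => (a < m./2 : nat))); last by move=> d _; rewrite sum_eqn.
  by rewrite sum_nat_const card_ord.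
have Q2 : \sum_(q : 'I_(m./2) * 'I_o) ((a:nat) == (q.1 : nat) + m./2 : nat)
    = o * ((m./2 <= a) && (a < m./2 + m./2)).
  rewrite -(pair_bigA _ (fun (i : 'I_(m./2)) (d : 'I_o) => ((a:nat) == (i : nat) + m./2 : nat))) /=.
  rewrite exchange_big /= (eq_bigr (fun _ => ((m./2 <= a) && (a < m./2 + m./2) : nat))); last first.
    by move=> d _; rewrite sum_eqnD.
  by rewrite sum_nat_const card_ord.
rewrite (eq_bigr (fun p : 'I_m * 'I_r => ((a:nat) == (p.1 : nat) : nat) + ((a:nat) == ((p.1 : nat) + p.2.+1) %% m : nat))); last first.
  move=> [i d] _ /=; have := ltn_ord i; have := ltn_ord d.
  have := @modc m i d.+1; lia.
rewrite (eq_bigr (fun q : 'I_(m./2) * 'I_o => ((a:nat) == (q.1 : nat) : nat) + ((a:nat) == (q.1 : nat) + m./2 : nat))); last first.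
  move=> [k t] _ /=; have := ltn_ord k; have := ltn_ord t; lia.
rewrite !big_split /= P1 P2 Q1 Q2.
have : o = 0 \/ o = 1 by lia.
case=> ho1; rewrite ho1; lia.
Qed.

Lemma deg_W (m r o : nat) (w : W m r o) : 0 < m -> 2 * r + 1 + o <= m ->
  #|[set u | @ge m r o (inr w) u]| <= 2 * r + 1 + o.
Proof.
move=> hm hr.
rewrite deg_sum big_sumType /= [X in _ + X]big1 // addn0.
case: w => [j|[[i d]|[k t]]] /=.
- by rewrite sum_eqn'; lia.
- apply: (@leq_trans (\sum_(a < m) (((a : nat) == i : nat) + ((a : nat) == (i + d.+1) %% m : nat)))).
    by apply: leq_sum => a _; lia.
  rewrite big_split /= !sum_eqn'; have := ltn_ord d; lia.
- apply: (@leq_trans (\sum_(a < m) (((a : nat) == k : nat) + ((a : nat) == k + m./2 : nat)))).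
    by apply: leq_sum => a _; lia.
  rewrite big_split /= !sum_eqn'; have := ltn_ord t; lia.
Qed.

Lemma tr_dist (m r o : nat) (w w' : W m r o) : 0 < m -> 2 * r + 1 + o <= m -> o <= 1 ->
  (0 < o -> m = m./2 + m./2) ->
  (forall a : 'I_m, trw w a = trw w' a) -> w = w'.
Proof.
move=> hm hr ho he H.
have Hx : forall x, x < m -> trw w x = trw w' x by move=> x hx; exact: (H (Ordinal hx)).
clear H.
case: w Hx => [j|[[i d]|[k t]]]; case: w' => [j'|[[i' d']|[k' t']]] /= Hx.
- have := ltn_ord j; have := ltn_ord j'; move=> h1 h2.
  congr inl; apply: val_inj => /=.
  case: (ltnP j m) => l1; first by move: (Hx j l1); rewrite eqxx; lia.
  case: (ltnP j' m) => l2; first by move: (Hx j' l2); rewrite eqxx; lia.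
  lia.
- exfalso; have hi := ltn_ord i'; have hd := ltn_ord d'; have hj := ltn_ord j.
  have c1 : d'.+1 < m by lia.
  have hq := ltn_pmod (i' + d'.+1) hm.
  move: ((i' + d'.+1) %% m) (@modc _ _ _ hi c1) hq Hx => q mq hq Hx.
  move: (Hx i' hi) (Hx q hq); rewrite !eqxx ?orbT; lia.
- exfalso; have hk := ltn_ord k'; have ht := ltn_ord t'; have hj := ltn_ord j.
  have hk2 : k' + m./2 < m by lia.
  move: (Hx k' ltac:(lia)) (Hx _ hk2); rewrite !eqxx ?orbT; lia.
- exfalso; have hi := ltn_ord i; have hd := ltn_ord d; have hj := ltn_ord j'.
  have c1 : d.+1 < m by lia.
  have hq := ltn_pmod (i + d.+1) hm.
  move: ((i + d.+1) %% m) (@modc _ _ _ hi c1) hq Hx => q mq hq Hx.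
  move: (Hx i hi) (Hx q hq); rewrite !eqxx ?orbT; lia.
- have hi := ltn_ord i; have hd := ltn_ord d; have hi' := ltn_ord i'; have hd' := ltn_ord d'.
  have c1 : d.+1 < m by lia.
  have c2 : d'.+1 < m by lia.
  have hq := ltn_pmod (i + d.+1) hm.
  have hq' := ltn_pmod (i' + d'.+1) hm.
  move: ((i + d.+1) %% m) (@modc _ _ _ hi c1) hq Hx => q mq hq Hx.
  move: ((i' + d'.+1) %% m) (@modc _ _ _ hi' c2) hq' Hx => q' mq' hq' Hx.
  suff [h1 h2] : (i : nat) = i' /\ (d : nat) = d'.
    by congr (inr (inl (_, _))); apply: val_inj.
  move: (Hx i hi) (Hx q hq) (Hx i' hi') (Hx q' hq'); rewrite !eqxx ?orbT; lia.
- exfalso; have hi := ltn_ord i; have hd := ltn_ord d; have hk := ltn_ord k'; have ht := ltn_ord t'.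
  have c1 : d.+1 < m by lia.
  have hq := ltn_pmod (i + d.+1) hm.
  have hk2 : k' + m./2 < m by lia.
  move: ((i + d.+1) %% m) (@modc _ _ _ hi c1) hq Hx => q mq hq Hx.
  move: (Hx i hi) (Hx q hq) (Hx k' ltac:(lia)) (Hx _ hk2); rewrite !eqxx ?orbT; lia.
- exfalso; have hk := ltn_ord k; have ht := ltn_ord t; have hj := ltn_ord j'.
  have hk2 : k + m./2 < m by lia.
  move: (Hx k ltac:(lia)) (Hx _ hk2); rewrite !eqxx ?orbT; lia.
- exfalso; have hi := ltn_ord i'; have hd := ltn_ord d'; have hk := ltn_ord k; have ht := ltn_ord t.
  have c1 : d'.+1 < m by lia.
  have hq := ltn_pmod (i' + d'.+1) hm.
  have hk2 : k + m./2 < m by lia.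
  move: ((i' + d'.+1) %% m) (@modc _ _ _ hi c1) hq Hx => q mq hq Hx.
  move: (Hx i' hi) (Hx q hq) (Hx k ltac:(lia)) (Hx _ hk2); rewrite !eqxx ?orbT; lia.
- have hk := ltn_ord k; have ht := ltn_ord t; have hk' := ltn_ord k'; have ht' := ltn_ord t'.
  suff [h1 h2] : (k : nat) = k' /\ (t : nat) = t'.
    by congr (inr (inr (_, _))); apply: val_inj.
  move: (Hx k ltac:(lia)); rewrite !eqxx; lia.
Qed.

Lemma bigmin_le_nat (I : finType) (P : pred I) (F : I -> nat) x j :
  P j -> \big[minn/x]_(i | P i) F i <= F j.
Proof.
move=> Pj; rewrite unlock /reducebig.
have : j \in index_enum I by rewrite mem_index_enum.
elim: (index_enum I) => [|k s IH] //=; rewrite inE; case/orP => [/eqP <-|/IH h].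
  by rewrite Pj geq_minl.
by case: (P k) => //; rewrite geq_min h orbT.
Qed.

Lemma adim_eq (T : finType) (e : rel T) (m : nat) (A : {set T}) :
  adj_resolving e A -> #|A| = m -> (forall B, adj_resolving e B -> m <= #|B|) ->
  m <= #|T| -> adim e = m.
Proof.
move=> rA cA hB hT; apply/eqP; rewrite eqn_leq; apply/andP; split.
  by rewrite -cA /adim; apply: bigmin_le_nat.
rewrite /adim; apply: (big_ind (fun x => m <= x)) => //.
  by move=> x y hx hy; rewrite leq_min hx hy.
Qed.

Section Main.
Variables (m r o : nat).
Hypotheses (hm : 0 < m) (hr : 2 * r + 1 + o <= m) (ho : o <= 1)
  (he : 0 < o -> m = m./2 + m./2).

Definition Aset : {set V m r o} := [set (inl a : V m r o) | a : 'I_m].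

Lemma card_Aset : #|Aset| = m.
Proof. by rewrite card_imset ?card_ord // => a b [] . Qed.

Lemma Aset_res : adj_resolving (@ge m r o) Aset.
Proof.
apply/forallP => x; apply/forallP => y; apply/implyP => nxy.
case: x nxy => [a|w]; case: y => [b|w'] nxy.
- apply/existsP; exists (inl a); rewrite imset_f //= /d1.
  rewrite (_ : (inl a == inl a :> V m r o) = true); last by apply/eqP.
  by rewrite (negPf nxy).
- apply/existsP; exists (inl a); rewrite imset_f //= /d1.
  rewrite (_ : (inl a == inl a :> V m r o) = true); last by apply/eqP.
  by repeat case: ifP.
- apply/existsP; exists (inl b); rewrite imset_f //= /d1.
  rewrite (_ : (inl b == inl b :> V m r o) = true); last by apply/eqP.
  by repeat case: ifP.
- have : [exists a : 'I_m, trw w a != trw w' a].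
    case: (boolP [exists a : 'I_m, trw w a != trw w' a]) => // Hn; exfalso.
    move: Hn; rewrite negb_exists => /forallP Hf.
    move/eqP: nxy; apply; congr inr; apply: (@tr_dist m r o w w' hm hr ho he) => a.
    by move: (Hf a) => /negPn /eqP.
  case/existsP => a ha; apply/existsP; exists (inl a); rewrite imset_f //= /d1 /=.
  by move: ha; case: (trw w a); case: (trw w' a).
Qed.

Lemma maxdeg_V : maxdeg (@ge m r o) = 2 * r + 1 + o.
Proof.
apply/eqP; rewrite eqn_leq; apply/andP; split.
  apply/bigmax_leqP => v _; case: v => [a|w].
    by rewrite deg_A.
  by apply: deg_W.
apply: (bigmax_sup (inl (Ordinal hm) : V m r o)) => //.
by rewrite deg_A.
Qed.

End Main.

Theorem theorem3p1 (m Delta : nat) :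
  0 < m -> 1 <= Delta <= m -> ~~ odd ((Delta - 1) * m) ->
  exists (T : finType) (e : rel T),
    [/\ simple_graph e, adim e = m, maxdeg e = Delta &
        adim e * (Delta + 3) = 2 * (#|T| - 1)].
Proof.
move=> hm /andP[hD1 hDm] hodd.
set r := (Delta - 1)./2.
set o : nat := odd (Delta - 1).
have hDelta : Delta = 2 * r + 1 + o.
  have := odd_double_half (Delta - 1); rewrite -/r -/o; lia.
have ho : o <= 1 by rewrite /o; case: odd.
have hr : 2 * r + 1 + o <= m by lia.
have he : 0 < o -> m = m./2 + m./2.
  move=> o1; move: hodd; rewrite oddM.
  have : odd (Delta - 1) by move: o1; rewrite /o; case: odd.
  move=> -> /= hm2; have := odd_double_half m; rewrite (negPf hm2); lia.
have hcard := card_V m r o.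
have hadim : adim (@ge m r o) = m.
  apply: (@adim_eq _ _ m _ (@Aset_res m r o hm hr ho he) (card_Aset m r o)); last by lia.
  move=> B hB.
  have Hdeg : forall v : V m r o, #|[set u | ge v u]| <= 2 * r + 1 + o.
    case=> [a|w]; first by rewrite deg_A.
    by apply: deg_W.
  have := @lower_bound _ _ (2 * r + 1 + o) B (proj1 (ge_simple m r o)) (proj2 (ge_simple m r o)) Hdeg hB.
  rewrite hcard; move: (#|B|) => b H.
  have key : m * (2 * r + 1 + o + 3) <= b * (2 * r + 1 + o + 3).
    have : o = 0 \/ o = 1 by lia.
    case=> ho1; [rewrite ho1 in H *; nia | have := he ltac:(lia); rewrite ho1 in H *; nia].
  have p0 : 0 < 2 * r + 1 + o + 3 by lia.
  by move: key; rewrite (leq_pmul2r p0).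
exists (V m r o), (@ge m r o); split.
- exact: ge_simple.
- exact: hadim.
- by rewrite maxdeg_V // hDelta.
- rewrite hadim hcard hDelta.
  have : o = 0 \/ o = 1 by lia.
  case=> ho1; [rewrite ho1; nia | have := he ltac:(lia); rewrite ho1; nia].
Qed.
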